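(* Let $K\ge1$, $T\ge1$, $\ell_1,\dots,\ell_T\in[0,1]^K$, $\phi>1$, $\alpha>0$, and suppose the cumulative loss of FlipFlop with parameters $\phi,\alpha$ satisfies $H^{\mathrm{ff}}_T\ge L^*_T$. Then \[ \underline{V}_T\le\frac{L^*_T(T-L^*_T)}{T}+\Big(\frac{\phi}{\phi-1}+\frac{\phi}{\alpha}+2\Big)\underline{\Delta}_T+\frac{\phi}{\alpha}. \]
   Context: Hedge setting: $K$ experts; in round $t$ the learner chooses a probability vector $w_t$, then $\ell_t$ is revealed and the learner suffers $h_t=\sum_kw_{t,k}\ell_{t,k}$. Write $L_{t,k}=\sum_{s=1}^t\ell_{s,k}$ ($L_{0,k}=0$), $L^*_t=\min_kL_{t,k}$, $H_T=\sum_{t\le T}h_t$. Exponential weights with learning rate $\eta\in(0,\infty]$ at time $t$: $w_{t,k}=e^{-\eta L_{t-1,k}}/\sum_je^{-\eta L_{t-1,j}}$ if $\eta<\infty$; for $\eta=\infty$, $w_t$ uniform on $\{k:L_{t-1,k}=L^*_{t-1}\}$. With learning rate $\eta_t$ in round $t$: mix loss $m_t=-\frac1{\eta_t}\ln\sum_kw_{t,k}e^{-\eta_t\ell_{t,k}}$ if $\eta_t<\infty$, $m_t=L^*_t-L^*_{t-1}$ if $\eta_t=\infty$; mixability gap $\delta_t=h_t-m_t$; loss variance $v_t=\sum_kw_{t,k}(\ell_{t,k}-h_t)^2$. FlipFlop with parameters $\phi>1,\alpha>0$: keeps accumulators $\overline{\Delta}$ (flip) and $\underline{\Delta}$ (flop),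 both initially $0$, starting in the flip regime. In round $t$: flip regime uses $\eta_t=\infty$; flop regime uses $\eta_t=\ln K/\underline{\Delta}_{t-1}$ ($=\infty$ if $\underline{\Delta}_{t-1}=0$); weights are exponential weights with learning rate $\eta_t$ from $L_{t-1}$. After round $t$, $\delta_t$ is added to the current regime's accumulator. If in flip and $\overline{\Delta}_t>(\phi/\alpha)\underline{\Delta}_t$, switch to flop for round $t+1$; if in flop and $\underline{\Delta}_t>\alpha\overline{\Delta}_t$, switch to flip for round $t+1$. $H^{\mathrm{ff}}_T$ is FlipFlop's cumulative loss, $\underline{\Delta}_T$ the sum of $\delta_t$ over flop rounds $t\le T$, and $\underline{V}_T$ the sum of $v_t$ over flop rounds $t\le T$. *)

(* Defs.v *)
From Stdlib Require Import Reals Lra List.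
Open Scope R_scope.

(* Experts are indexed 0..K-1; rounds 1..T; l t k = loss of expert k in round t. *)
Definition sumK (K : nat) (f : nat -> R) : R :=
  fold_right (fun k acc => f k + acc) 0 (seq 0 K).

Definition minK (K : nat) (f : nat -> R) : R :=
  fold_right (fun k acc => Rmin (f k) acc) (f 0%nat) (seq 0 K).

Fixpoint cumL (l : nat -> nat -> R) (t k : nat) : R :=
  match t with
  | O => 0
  | S s => cumL l s k + l (S s) k
  end.

Definition Lstar (K : nat) (l : nat -> nat -> R) (t : nat) : R :=
  minK K (cumL l t).

(* Exponential weights with learning rate eta (None = +infinity),
   computed from the cumulative loss vector Lp = L_{t-1}. *)
Definition ew (K : nat) (Lp : nat -> R) (eta : option R) (k : nat) : R :=
  match eta with
  | Some e => exp (- e * Lp k) / sumK K (fun j => exp (- e * Lp j))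
  | None =>
      let ind := fun j => if Req_EM_T (Lp j) (minK K Lp) then 1 else 0 in
      ind k / sumK K ind
  end.

Definition hloss (K : nat) (w lt : nat -> R) : R := sumK K (fun k => w k * lt k).

(* mix loss m_t; Lprev = L*_{t-1}, Lnow = L*_t *)
Definition mixloss (K : nat) (w lt : nat -> R) (eta : option R) (Lprev Lnow : R) : R :=
  match eta with
  | Some e => - (1 / e) * ln (sumK K (fun k => w k * exp (- e * lt k)))
  | None => Lnow - Lprev
  end.

Definition lvar (K : nat) (w lt : nat -> R) (h : R) : R :=
  sumK K (fun k => w k * (lt k - h) ^ 2).

(* FlipFlop state after t rounds:
   inflip = regime used in round t+1; Dflip/Dflop = accumulators;
   Hff = cumulative loss of FlipFlop; Vflop = sum of v over flop rounds. *)
Record ffst := mkst { inflip : bool; Dflip : R; Dflop : R; Hff : R; Vflop : R }.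

Definition ff_eta (K : nat) (st : ffst) : option R :=
  if inflip st then None
  else if Req_EM_T (Dflop st) 0 then None
  else Some (ln (INR K) / Dflop st).

Fixpoint ffstate (K : nat) (phi alpha : R) (l : nat -> nat -> R) (t : nat) : ffst :=
  match t with
  | O => mkst true 0 0 0 0
  | S s =>
      let st := ffstate K phi alpha l s in
      let eta := ff_eta K st in
      let w := ew K (cumL l s) eta in
      let lt := l (S s) in
      let h := hloss K w lt in
      let m := mixloss K w lt eta (Lstar K l s) (Lstar K l (S s)) in
      let d := h - m in
      let v := lvar K w lt h in
      if inflip st then
        let df := Dflip st + d in
        mkst (if Rlt_dec (phi / alpha * Dflop st) df then false else true)
             df (Dflop st) (Hff st + h) (Vflop st)
      else
        let dl := Dflop st + d in
        mkst (if Rlt_dec (alpha * Dflip st) dl then true else false)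
             (Dflip st) dl (Hff st + h) (Vflop st + v)
  end.

(* Main.v *)
Require Import Defs.
From Stdlib Require Import Reals Lra List Lia.
Open Scope R_scope.

Lemma expl x y : x <= y -> exp x <= exp y.
Proof. intros [H|H]; [left; apply exp_increasing; auto | subst; lra]. Qed.

Lemma lnl x y : 0 < x -> x <= y -> ln x <= ln y.
Proof. intros Hx [H|H]; [left; apply ln_increasing; auto | subst; lra]. Qed.

Lemma ln_divR x y : 0 < x -> 0 < y -> ln (x / y) = ln x - ln y.
Proof. intros; unfold Rdiv; rewrite ln_mult, ln_Rinv; try lra; apply Rinv_0_lt_compat; auto. Qed.

Lemma fold_sum_acc (f : nat -> R) l a :
  fold_right (fun k acc => f k + acc) a l = fold_right (fun k acc => f k + acc) 0 l + a.
Proof. induction l; simpl; [lra | rewrite IHl; lra]. Qed.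

Lemma sumK_S n f : sumK (S n) f = sumK n f + f n.
Proof. unfold sumK. rewrite seq_S, fold_right_app. simpl. rewrite fold_sum_acc. lra. Qed.

Lemma sumK_0 f : sumK 0 f = 0.
Proof. reflexivity. Qed.

Lemma sumK_ext n f g : (forall k, (k < n)%nat -> f k = g k) -> sumK n f = sumK n g.
Proof. induction n; intros H; [reflexivity|]. rewrite !sumK_S, IHn, H; auto. Qed.

Lemma sumK_le n f g : (forall k, (k < n)%nat -> f k <= g k) -> sumK n f <= sumK n g.
Proof. induction n; intros H; [rewrite !sumK_0; lra|]. rewrite !sumK_S.
  assert (f n <= g n) by auto. assert (sumK n f <= sumK n g) by auto. lra. Qed.

Lemma sumK_plus n f g : sumK n (fun k => f k + g k) = sumK n f + sumK n g.
Proof. induction n; [rewrite !sumK_0; lra|]. rewrite !sumK_S, IHn; lra. Qed.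

Lemma sumK_scal n c f : sumK n (fun k => c * f k) = c * sumK n f.
Proof. induction n; [rewrite !sumK_0; lra|]. rewrite !sumK_S, IHn; lra. Qed.

Lemma sumK_const n c : sumK n (fun _ => c) = INR n * c.
Proof. induction n; [rewrite !sumK_0; simpl; lra|]. rewrite !sumK_S, IHn, S_INR; lra. Qed.

Lemma sumK_ge0 n f : (forall k, (k < n)%nat -> 0 <= f k) -> 0 <= sumK n f.
Proof. intros H. rewrite <- (Rmult_0_r (INR n)), <- sumK_const. apply sumK_le; auto. Qed.

Lemma sumK_ge_term n f j : (forall k, (k < n)%nat -> 0 <= f k) -> (j < n)%nat -> f j <= sumK n f.
Proof. induction n; intros H Hj; [lia|]. rewrite sumK_S.
  assert (0 <= sumK n f) by (apply sumK_ge0; auto).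
  destruct (Nat.eq_dec j n); [subst; lra|].
  assert (f j <= sumK n f) by (apply IHn; auto; lia).
  assert (0 <= f n) by auto. lra. Qed.

Lemma fold_min_le (f : nat -> R) l a :
  fold_right (fun k acc => Rmin (f k) acc) a l <= a /\
  forall x, In x l -> fold_right (fun k acc => Rmin (f k) acc) a l <= f x.
Proof. induction l; simpl; [split; [lra| tauto]|]. destruct IHl as [H1 H2]. split.
  - eapply Rle_trans; [apply Rmin_r| exact H1].
  - intros x [->|Hx]; [apply Rmin_l|]. eapply Rle_trans; [apply Rmin_r| auto]. Qed.

Lemma fold_min_att (f : nat -> R) l a :
  fold_right (fun k acc => Rmin (f k) acc) a l = a \/
  exists x, In x l /\ fold_right (fun k acc => Rmin (f k) acc) a l = f x.
Proof. induction l; simpl; [auto|]. destruct (Rle_dec (f a0) (fold_right (fun k acc => Rmin (f k) acc) a l)).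
  - rewrite Rmin_left by auto. right; exists a0; split; [left; auto|reflexivity].
  - rewrite Rmin_right by lra. destruct IHl as [H|[x [Hx H]]]; [left; auto| right; exists x; split; [right; auto|auto]]. Qed.

Lemma minK_le K f k : (k < K)%nat -> minK K f <= f k.
Proof. intros. unfold minK. apply (proj2 (fold_min_le f (seq 0 K) (f 0%nat))). apply in_seq; lia. Qed.

Lemma minK_att K f : (1 <= K)%nat -> exists k, (k < K)%nat /\ minK K f = f k.
Proof. intros. unfold minK. destruct (fold_min_att f (seq 0 K) (f 0%nat)) as [H0|[x [Hx H0]]].
  - exists 0%nat; split; [lia|auto].
  - exists x; split; auto. apply in_seq in Hx; lia. Qed.

Definition isprob K (w : nat -> R) := (forall k, (k<K)%nat -> 0 <= w k) /\ sumK K w = 1.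

Lemma sumK_div n f c : sumK n (fun k => f k / c) = sumK n f / c.
Proof. unfold Rdiv. rewrite (sumK_ext n _ (fun k => /c * f k)) by (intros; lra).
  rewrite sumK_scal; lra. Qed.

Lemma ew_prob K Lp eta : (1 <= K)%nat -> isprob K (ew K Lp eta).
Proof. intros HK. destruct eta as [e|]; unfold ew, isprob.
  - set (Z := sumK K (fun j => exp (- e * Lp j))).
    assert (HZ : 0 < Z).
    { apply Rlt_le_trans with (exp (-e * Lp 0%nat)); [apply exp_pos|].
      unfold Z; apply (sumK_ge_term K (fun j => exp (-e * Lp j)) 0%nat); [|lia].
      intros; left; apply exp_pos. }
    split.
    + intros; unfold Rdiv; apply Rmult_le_pos; [left; apply exp_pos| left; apply Rinv_0_lt_compat; auto].
    + rewrite sumK_div. fold Z. field. lra.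
  - set (ind := fun j => if Req_EM_T (Lp j) (minK K Lp) then 1 else 0).
    assert (Hi : forall k, 0 <= ind k) by (intros; unfold ind; destruct Req_EM_T; lra).
    destruct (minK_att K Lp HK) as [k0 [Hk0 E0]].
    assert (HZ : 1 <= sumK K ind).
    { replace 1 with (ind k0) by (unfold ind; destruct Req_EM_T; [auto|congruence]).
      apply sumK_ge_term; auto. }
    split.
    + intros k Hk. change (0 <= ind k / sumK K ind). unfold Rdiv; apply Rmult_le_pos; [apply Hi|]. left; apply Rinv_0_lt_compat; lra.
    + change (sumK K (fun k => ind k / sumK K ind) = 1). rewrite sumK_div. field. lra.
Qed.

Lemma h_bounds K w lt : isprob K w -> (forall k, (k<K)%nat -> 0 <= lt k <= 1) ->
  0 <= hloss K w lt <= 1.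
Proof. intros [Hw Hs] Hl. unfold hloss. split.
  - apply sumK_ge0; intros k Hk; specialize (Hw k Hk); specialize (Hl k Hk); nra.
  - rewrite <- Hs. apply sumK_le; intros k Hk; specialize (Hw k Hk); specialize (Hl k Hk); nra.
Qed.

Lemma lvar_bound K w lt : isprob K w -> (forall k, (k<K)%nat -> 0 <= lt k <= 1) ->
  lvar K w lt (hloss K w lt) <= hloss K w lt - hloss K w lt ^ 2.
Proof. intros [Hw Hs] Hl. unfold lvar. set (h := hloss K w lt).
  apply Rle_trans with (sumK K (fun k => (w k * lt k + (-2*h) * (w k * lt k)) + h^2 * w k)).
  - apply sumK_le; intros k Hk; specialize (Hw k Hk); specialize (Hl k Hk).
    assert (0 <= w k * (lt k * (1 - lt k))) by (apply Rmult_le_pos; [auto| apply Rmult_le_pos; lra]). nra.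
  - rewrite !sumK_plus, !sumK_scal, Hs. fold (hloss K w lt). fold h. lra.
Qed.

Lemma lvar_ge0 K w lt h : isprob K w -> 0 <= lvar K w lt h.
Proof. intros [Hw Hs]. unfold lvar. apply sumK_ge0. intros k Hk; specialize (Hw k Hk). apply Rmult_le_pos; [auto| apply pow2_ge_0]. Qed.

Lemma inc_bounds K L lt : (1 <= K)%nat -> (forall k, (k<K)%nat -> 0 <= lt k <= 1) ->
  0 <= minK K (fun k => L k + lt k) - minK K L <= 1.
Proof. intros HK Hl.
  destruct (minK_att K L HK) as [k0 [Hk0 E0]].
  destruct (minK_att K (fun k => L k + lt k) HK) as [k1 [Hk1 E1]].
  pose proof (minK_le K L k1 Hk1). pose proof (minK_le K (fun k => L k + lt k) k0 Hk0).
  simpl in *. pose proof (Hl k0 Hk0). pose proof (Hl k1 Hk1). lra. Qed.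

Lemma leader_none K L lt : (1 <= K)%nat -> (forall k, (k<K)%nat -> 0 <= lt k <= 1) ->
  minK K (fun k => L k + lt k) - minK K L <= hloss K (ew K L None) lt.
Proof. intros HK Hl. destruct (ew_prob K L None HK) as [Hw Hs].
  set (inc := minK K (fun k => L k + lt k) - minK K L).
  apply Rle_trans with (sumK K (fun k => inc * ew K L None k)).
  - rewrite sumK_scal, Hs; lra.
  - unfold hloss. apply sumK_le. intros k Hk.
    assert (lt k >= inc \/ ew K L None k = 0).
    { unfold ew. cbv beta zeta. destruct (Req_EM_T (L k) (minK K L)) as [E|E].
      - left. pose proof (minK_le K (fun k => L k + lt k) k Hk). simpl in H. unfold inc. lra.
      - right. unfold Rdiv; ring. }
    pose proof (Hw k Hk). destruct H as [H|H]; [nra| rewrite H; lra].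
Qed.

Lemma mix_le_h K w lt e a b : isprob K w -> 0 < e ->
  mixloss K w lt (Some e) a b <= hloss K w lt.
Proof. intros [Hw Hs] He. unfold mixloss. set (h := hloss K w lt).
  assert (J : exp (- e * h) <= sumK K (fun k => w k * exp (- e * lt k))).
  { apply Rle_trans with (sumK K (fun k => exp (-e*h) * w k + (- e * exp (-e*h)) * (w k * lt k) + (e * exp(-e*h) * h) * w k)).
    - rewrite !sumK_plus, !sumK_scal, Hs. fold (hloss K w lt). fold h. lra.
    - apply sumK_le. intros k Hk. specialize (Hw k Hk).
      replace (- e * lt k) with (-e * h + (- e * (lt k - h))) by ring. rewrite exp_plus.
      pose proof (exp_ineq1_le (- e * (lt k - h))). pose proof (exp_pos (-e*h)).
      assert (0 <= (w k * exp (-e*h)) * (exp (- e * (lt k - h)) - (1 + - e * (lt k - h)))) by (apply Rmult_le_pos; [apply Rmult_le_pos; lra| lra]).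
      nra. }
  assert (ln (exp (-e*h)) <= ln (sumK K (fun k => w k * exp (- e * lt k)))) by (apply lnl; auto; apply exp_pos).
  rewrite ln_exp in H.
  assert (0 < 1/e) by (apply Rdiv_lt_0_compat; lra).
  apply Rle_trans with (- (1/e) * (-e*h)); [nra| right; field; lra].
Qed.

Lemma mix_zero K w lt a b : isprob K w -> mixloss K w lt (Some 0) a b = 0.
Proof. intros [Hw Hs]. unfold mixloss.
  rewrite (sumK_ext K _ w) by (intros; replace (- 0 * lt k) with 0 by ring; rewrite exp_0; ring).
  rewrite Hs, ln_1. ring. Qed.

Lemma exp_convex s x : 0 <= s <= 1 -> exp (s * x) <= s * exp x + (1 - s).
Proof. intros Hs.
  assert (E1 : exp x = exp (s*x) * exp (x - s*x)) by (rewrite <- exp_plus; f_equal; ring).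
  assert (E2 : 1 = exp (s*x) * exp (- (s*x))) by (rewrite <- exp_plus, <- exp_0; f_equal; ring).
  pose proof (exp_ineq1_le (x - s*x)). pose proof (exp_ineq1_le (- (s*x))). pose proof (exp_pos (s*x)).
  rewrite E1. replace (1 - s) with ((1 - s) * (exp (s*x) * exp (- (s*x)))) by (rewrite <- E2; ring).
  assert (0 <= exp (s*x) * s * (exp (x - s*x) - (1 + (x - s*x)))) by (apply Rmult_le_pos; [apply Rmult_le_pos|]; lra).
  assert (0 <= exp (s*x) * (1-s) * (exp (- (s*x)) - (1 + - (s*x)))) by (apply Rmult_le_pos; [apply Rmult_le_pos|]; lra).
  nra. Qed.

Definition Zs K e (L : nat -> R) := sumK K (fun k => exp (- e * L k)).
Definition Phi K e L := - (1/e) * ln (Zs K e L).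
Definition gg K e L := Phi K e L - minK K L.

Lemma Zs_pos K e L : (1 <= K)%nat -> 0 < Zs K e L.
Proof. intros. apply Rlt_le_trans with (exp (-e * L 0%nat)); [apply exp_pos|].
  unfold Zs; apply (sumK_ge_term K (fun j => exp (-e * L j)) 0%nat); [|lia].
  intros; left; apply exp_pos. Qed.

Lemma INR_K_pos K : (1 <= K)%nat -> 0 < INR K.
Proof. intros. apply lt_0_INR. lia. Qed.

Lemma g_bounds K e L : (1 <= K)%nat -> 0 < e -> - (ln (INR K)) / e <= gg K e L <= 0.
Proof. intros HK He. unfold gg, Phi. set (mn := minK K L).
  destruct (minK_att K L HK) as [k0 [Hk0 E0]]. fold mn in E0.
  assert (Z1 : exp (- e * mn) <= Zs K e L).
  { rewrite E0. apply (sumK_ge_term K (fun j => exp (-e * L j))); auto. intros; left; apply exp_pos. }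
  assert (Z2 : Zs K e L <= INR K * exp (- e * mn)).
  { rewrite <- sumK_const. apply sumK_le. intros k Hk. apply expl.
    pose proof (minK_le K L k Hk). fold mn in H. nra. }
  pose proof (INR_K_pos K HK).
  assert (l1 : -e*mn <= ln (Zs K e L)) by (rewrite <- (ln_exp (-e*mn)); apply lnl; auto; apply exp_pos).
  assert (l2 : ln (Zs K e L) <= ln (INR K) + - e * mn).
  { rewrite <- (ln_exp (-e*mn)). rewrite <- ln_mult by (auto; apply exp_pos). apply lnl; auto. apply Zs_pos; auto. }
  assert (0 < 1/e) by (apply Rdiv_lt_0_compat; lra).
  set (u := ln (Zs K e L)) in *.
  split.
  - apply Rle_trans with (- (1/e) * (ln (INR K) + - e * mn) - mn).
    + right; field; lra.
    + assert ((1/e) * u <= (1/e) * (ln (INR K) + - e * mn)) by (apply Rmult_le_compat_l; lra). lra.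
  - apply Rle_trans with (- (1/e) * (-e*mn) - mn).
    + assert ((1/e) * (-e*mn) <= (1/e) * u) by (apply Rmult_le_compat_l; lra). lra.
    + right; field; lra.
Qed.

Lemma power_mean K e e' L : (1 <= K)%nat -> 0 < e' <= e ->
  Phi K e L - Phi K e' L <= ln (INR K) * (1/e' - 1/e).
Proof. intros HK He. unfold Phi.
  pose proof (INR_K_pos K HK). pose proof (Zs_pos K e L HK) as HZ. pose proof (Zs_pos K e' L HK) as HZ'.
  set (s := e'/e). assert (Hs : 0 < s <= 1).
  { unfold s; split; [apply Rdiv_lt_0_compat; lra|]. apply Rmult_le_reg_r with e; [lra|].
    unfold Rdiv; rewrite Rmult_assoc, Rinv_l; lra. }
  set (Z := Zs K e L) in *. set (Z' := Zs K e' L) in *.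
  set (c := ln (Z / INR K)).
  assert (Ec : exp (- c) = INR K / Z).
  { unfold c. rewrite exp_Ropp, exp_ln by (apply Rdiv_lt_0_compat; lra). field; lra. }
  assert (B : Z' <= exp (s * c) * INR K).
  { apply Rle_trans with (sumK K (fun k => (exp (s*c) * s * exp (-c)) * exp (- e * L k) + (exp (s*c) * (1 - s)))).
    - unfold Z', Zs. apply sumK_le. intros k Hk.
      replace (- e' * L k) with (s * c + s * (- e * L k - c)) by (unfold s; field; lra).
      rewrite exp_plus. pose proof (exp_convex s (- e * L k - c) ltac:(lra)).
      replace (exp (- e * L k - c)) with (exp (- e * L k) * exp (-c)) in H0 by (rewrite <- exp_plus; f_equal; ring).
      pose proof (exp_pos (s*c)). nra.
    - rewrite sumK_plus, sumK_scal, sumK_const. fold (Zs K e L). fold Z. rewrite Ec.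
      right; field. lra. }
  assert (lB : ln Z' <= s * c + ln (INR K)).
  { rewrite <- (ln_exp (s*c)), <- ln_mult by (auto; apply exp_pos). apply lnl; auto. }
  unfold c in lB. rewrite ln_divR in lB by lra.
  assert (0 < 1/e') by (apply Rdiv_lt_0_compat; lra).
  assert ((1/e') * ln Z' <= (1/e') * (s * (ln Z - ln (INR K)) + ln (INR K))) by (apply Rmult_le_compat_l; lra).
  apply Rle_trans with (- (1 / e) * ln Z + (1/e') * (s * (ln Z - ln (INR K)) + ln (INR K))); [lra|].
  right. unfold s. field. lra.
Qed.

Lemma Phi_mono K e e' L : (1 <= K)%nat -> 0 < e' <= e -> Phi K e' L <= Phi K e L.
Proof. intros HK He. unfold Phi. set (mn := minK K L).
  destruct (minK_att K L HK) as [k0 [Hk0 E0]]. fold mn in E0.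
  set (S := fun a => sumK K (fun k => exp (- a * (L k - mn)))).
  assert (EZ : forall a, Zs K a L = exp (- a * mn) * S a).
  { intros a. unfold S, Zs. rewrite <- sumK_scal. apply sumK_ext. intros. rewrite <- exp_plus. f_equal; ring. }
  assert (S1 : forall a, 1 <= S a).
  { intros a. unfold S. replace 1 with (exp (- a * (L k0 - mn))) by (rewrite E0; replace (- a * (L k0 - L k0)) with 0 by ring; apply exp_0).
    apply (sumK_ge_term K (fun k => exp (- a * (L k - mn)))); auto. intros; left; apply exp_pos. }
  assert (S2 : S e <= S e').
  { unfold S. apply sumK_le. intros k Hk. apply expl. pose proof (minK_le K L k Hk). fold mn in H. nra. }
  assert (EL : forall a, ln (Zs K a L) = - a * mn + ln (S a)).
  { intros a. rewrite EZ, ln_mult, ln_exp; auto. apply exp_pos. specialize (S1 a); lra. }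
  rewrite !EL.
  assert (l0 : 0 <= ln (S e)) by (rewrite <- ln_1; apply lnl; [lra| auto]).
  assert (l1 : ln (S e) <= ln (S e')) by (apply lnl; auto; specialize (S1 e); lra).
  assert (Hi : 1/e <= 1/e') by (apply Rmult_le_reg_r with (e*e'); [nra|]; unfold Rdiv; field_simplify; lra).
  assert (0 < 1/e) by (apply Rdiv_lt_0_compat; lra).
  assert ((1/e) * ln (S e) <= (1/e') * ln (S e')).
  { apply Rle_trans with ((1/e) * ln (S e')); [apply Rmult_le_compat_l; lra| apply Rmult_le_compat_r; lra]. }
  apply Rle_trans with (mn - (1/e') * ln (S e')); [right; field; lra|].
  apply Rle_trans with (mn - (1/e) * ln (S e)); [lra| right; field; lra].
Qed.

Lemma mix_phi K Lp lt e a b : (1 <= K)%nat ->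
  mixloss K (ew K Lp (Some e)) lt (Some e) a b = Phi K e (fun k => Lp k + lt k) - Phi K e Lp.
Proof. intros HK. unfold mixloss, Phi. unfold ew.
  pose proof (Zs_pos K e Lp HK). pose proof (Zs_pos K e (fun k => Lp k + lt k) HK).
  rewrite (sumK_ext K _ (fun k => exp (- e * (Lp k + lt k)) / Zs K e Lp)).
  - rewrite sumK_div. fold (Zs K e (fun k => Lp k + lt k)). rewrite ln_divR by auto. ring.
  - intros. unfold Zs. rewrite (Rmult_plus_distr_l (-e)), exp_plus. field. fold (Zs K e Lp). lra.
Qed.

Definition gD K D L := if Req_EM_T D 0 then 0 else gg K (ln (INR K) / D) L.

Lemma lnK_pos K : (2 <= K)%nat -> 0 < ln (INR K).
Proof. intros. rewrite <- ln_1. apply ln_increasing; [lra|]. apply (lt_INR 1); lia. Qed.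

Lemma gD_bounds K D L : (2 <= K)%nat -> 0 <= D -> - D <= gD K D L <= 0.
Proof. intros HK HD. unfold gD. destruct Req_EM_T; [lra|].
  pose proof (lnK_pos K HK).
  assert (0 < ln (INR K) / D) by (apply Rdiv_lt_0_compat; lra).
  pose proof (g_bounds K (ln (INR K) / D) L ltac:(lia) H0).
  replace (- ln (INR K) / (ln (INR K) / D)) with (- D) in H1 by (field; lra). lra. Qed.

Lemma gD_Q K D D' L : (2 <= K)%nat -> 0 <= D <= D' -> D + gD K D L <= D' + gD K D' L.
Proof. intros HK HD. pose proof (gD_bounds K D L HK ltac:(lra)). pose proof (gD_bounds K D' L HK ltac:(lra)).
  unfold gD in *. destruct (Req_EM_T D' 0); destruct (Req_EM_T D 0); try lra.
  assert (0 < D) by (destruct HD as [[HD1|HD1] _]; [auto| congruence]).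
  pose proof (lnK_pos K HK).
  pose proof (power_mean K (ln (INR K) / D) (ln (INR K) / D') L ltac:(lia)) as PM.
  assert (0 < ln (INR K) / D') by (apply Rdiv_lt_0_compat; lra).
  assert (ln (INR K) / D' <= ln (INR K) / D).
  { unfold Rdiv. apply Rmult_le_compat_l; [lra|]. apply Rinv_le_contravar; lra. }
  specialize (PM ltac:(lra)). unfold gg.
  replace (ln (INR K) * (1 / (ln (INR K) / D') - 1 / (ln (INR K) / D))) with (D' - D) in PM by (field; lra).
  lra. Qed.

Lemma gD_anti K D D' L : (2 <= K)%nat -> 0 <= D <= D' -> gD K D' L <= gD K D L.
Proof. intros HK HD. pose proof (gD_bounds K D' L HK ltac:(lra)).
  unfold gD in *. destruct (Req_EM_T D' 0); destruct (Req_EM_T D 0); try lra.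
  assert (0 < D) by (destruct HD as [[HD1|HD1] _]; [auto| congruence]).
  pose proof (lnK_pos K HK).
  assert (0 < ln (INR K) / D') by (apply Rdiv_lt_0_compat; lra).
  assert (ln (INR K) / D' <= ln (INR K) / D).
  { unfold Rdiv. apply Rmult_le_compat_l; [lra|]. apply Rinv_le_contravar; lra. }
  pose proof (Phi_mono K (ln (INR K) / D) (ln (INR K) / D') L ltac:(lia) ltac:(lra)).
  unfold gg; lra. Qed.

Lemma flop_round K st Lp lt : (2 <= K)%nat -> inflip st = false ->
  let eta := ff_eta K st in
  let Lp' := fun k => Lp k + lt k in
  mixloss K (ew K Lp eta) lt eta (minK K Lp) (minK K Lp') - (minK K Lp' - minK K Lp)
  = gD K (Dflop st) Lp' - gD K (Dflop st) Lp.
Proof. intros HK Hf. cbv zeta. unfold ff_eta, gD. rewrite Hf.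
  destruct (Req_EM_T (Dflop st) 0).
  - simpl. lra.
  - rewrite mix_phi by lia. unfold gg. ring.
Qed.

Definition etaF K phi alpha l s := ff_eta K (ffstate K phi alpha l s).
Definition wF K phi alpha l s := ew K (cumL l s) (etaF K phi alpha l s).
Definition hF K phi alpha l s := hloss K (wF K phi alpha l s) (l (S s)).
Definition mF K phi alpha l s := mixloss K (wF K phi alpha l s) (l (S s)) (etaF K phi alpha l s) (Lstar K l s) (Lstar K l (S s)).
Definition vF K phi alpha l s := lvar K (wF K phi alpha l s) (l (S s)) (hF K phi alpha l s).

Lemma ff_flip K phi alpha l s : inflip (ffstate K phi alpha l s) = true ->
  let st := ffstate K phi alpha l s in
  let d := hF K phi alpha l s - mF K phi alpha l s in
  ffstate K phi alpha l (S s) =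
  mkst (if Rlt_dec (phi / alpha * Dflop st) (Dflip st + d) then false else true)
       (Dflip st + d) (Dflop st) (Hff st + hF K phi alpha l s) (Vflop st).
Proof. intros H. cbn [ffstate]. rewrite H. reflexivity. Qed.

Lemma ff_flop K phi alpha l s : inflip (ffstate K phi alpha l s) = false ->
  let st := ffstate K phi alpha l s in
  let d := hF K phi alpha l s - mF K phi alpha l s in
  ffstate K phi alpha l (S s) =
  mkst (if Rlt_dec (alpha * Dflip st) (Dflop st + d) then true else false)
       (Dflip st) (Dflop st + d) (Hff st + hF K phi alpha l s) (Vflop st + vF K phi alpha l s).
Proof. intros H. cbn [ffstate]. rewrite H. reflexivity. Qed.

Definition isflop K phi alpha l s := if inflip (ffstate K phi alpha l s) then false else true.

Fixpoint nF K phi alpha l s : nat := match s with O => O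
  | S s' => (nF K phi alpha l s' + if isflop K phi alpha l s' then 1 else 0)%nat end.
Fixpoint HF K phi alpha l s : R := match s with O => 0
  | S s' => HF K phi alpha l s' + if isflop K phi alpha l s' then hF K phi alpha l s' else 0 end.
Fixpoint Q2 K phi alpha l s : R := match s with O => 0
  | S s' => Q2 K phi alpha l s' + if isflop K phi alpha l s' then hF K phi alpha l s' ^ 2 else 0 end.
Fixpoint AF K phi alpha l s : R := match s with O => 0
  | S s' => AF K phi alpha l s' + if isflop K phi alpha l s' then Lstar K l (S s') - Lstar K l s' else 0 end.

Definition Inv K phi alpha l s : Prop :=
  let st := ffstate K phi alpha l s in
  let D := Dflop st in
  let n := INR (nF K phi alpha l s) in
  let x := HF K phi alpha l s in
  let A := AF K phi alpha l s in
  let q := Q2 K phi alpha l s in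
  let U := x - D - A in
  let c1 := phi / (phi - 1) in
  0 <= D /\ Vflop st <= x - q /\ n * q >= x * x /\ 0 <= x <= n /\ 0 <= q /\
  0 <= A <= n /\ 0 <= Lstar K l s - A <= INR s - n /\ (nF K phi alpha l s <= s)%nat /\
  (inflip st = true -> - c1 * D <= U <= c1 * D) /\
  (inflip st = false -> exists b0 gs, 0 <= b0 <= D /\ phi * b0 <= alpha * Dflip st /\ gs <= 0 /\
      U <= c1 * b0 + D + gD K D (cumL l s) /\ - c1 * b0 + gD K D (cumL l s) - gs <= U).

Lemma c1lem phi b0 D : 1 < phi -> 0 <= b0 -> phi * b0 <= D ->
  phi / (phi - 1) * b0 + D <= phi / (phi - 1) * D.
Proof. intros. apply Rmult_le_reg_r with (phi - 1); [lra|].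
  replace ((phi / (phi - 1) * b0 + D) * (phi - 1)) with (phi * b0 + D * (phi - 1)) by (field; lra).
  replace (phi / (phi - 1) * D * (phi - 1)) with (phi * D) by (field; lra). lra. Qed.

Lemma Lstar0 K l : (1 <= K)%nat -> Lstar K l 0 = 0.
Proof. intros HK. unfold Lstar. destruct (minK_att K (cumL l 0) HK) as [k [_ E]]. rewrite E. reflexivity. Qed.

Lemma inv_step K phi alpha l s : (2 <= K)%nat -> 1 < phi -> 0 < alpha ->
  (forall k, (k < K)%nat -> 0 <= l (S s) k <= 1) ->
  Inv K phi alpha l s -> Inv K phi alpha l (S s).
Proof.
  intros HK Hphi Hal Hl Hinv.
  assert (HK1 : (1 <= K)%nat) by lia.
  assert (Hc1 : 0 < phi / (phi - 1)) by (apply Rdiv_lt_0_compat; lra).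
  set (st := ffstate K phi alpha l s) in *.
  assert (Hw : isprob K (wF K phi alpha l s)) by (apply ew_prob; auto).
  pose proof (h_bounds K _ _ Hw Hl) as Hh. fold (hF K phi alpha l s) in Hh.
  pose proof (inc_bounds K (cumL l s) (l (S s)) HK1 Hl) as Hinc.
  change (minK K (fun k => cumL l s k + l (S s) k)) with (Lstar K l (S s)) in Hinc.
  change (minK K (cumL l s)) with (Lstar K l s) in Hinc.
  destruct Hinv as (HD & HV & HQ & Hx & Hq & HA & HB & Hn & Hflip & Hflop).
  fold st in HD, HV, Hflip, Hflop.
  unfold Inv. cbv zeta.
  destruct (inflip st) eqn:Ef.
  -
    rewrite (ff_flip K phi alpha l s Ef). cbv zeta. fold st.
    assert (Eisf : isflop K phi alpha l s = false) by (unfold isflop; fold st; rewrite Ef; auto).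
    simpl nF; simpl HF; simpl Q2; simpl AF. rewrite Eisf. cbn [Dflop Vflop Dflip inflip].
    rewrite !Nat.add_0_r, !Rplus_0_r.
    rewrite S_INR.
    specialize (Hflip eq_refl).
    split; [auto|]. split; [auto|]. split; [auto|]. split; [auto|]. split; [auto|].
    split; [auto|]. split; [lra|]. split; [lia|].
    destruct (Rlt_dec (phi / alpha * Dflop st) (Dflip st + (hF K phi alpha l s - mF K phi alpha l s))) as [Hs|Hs].
    + split; [intros; discriminate|]. intros _.
      exists (Dflop st), (gD K (Dflop st) (cumL l (S s))).
      pose proof (gD_bounds K (Dflop st) (cumL l (S s)) HK HD).
      split; [lra|]. split.
      { apply Rmult_le_reg_l with (/ alpha); [apply Rinv_0_lt_compat; lra|].
        replace (/ alpha * (phi * Dflop st)) with (phi / alpha * Dflop st) by (field; lra).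
        replace (/ alpha * (alpha * (Dflip st + (hF K phi alpha l s - mF K phi alpha l s)))) with
          (Dflip st + (hF K phi alpha l s - mF K phi alpha l s)) by (field; lra). lra. }
      split; [lra|]. split; lra.
    + split; [intros; auto|]. intros; discriminate.
  -
    rewrite (ff_flop K phi alpha l s Ef). cbv zeta. fold st.
    assert (Eisf : isflop K phi alpha l s = true) by (unfold isflop; fold st; rewrite Ef; auto).
    simpl nF; simpl HF; simpl Q2; simpl AF. rewrite Eisf. cbn [Dflop Vflop Dflip inflip].
    rewrite plus_INR, (S_INR s). change (INR 1) with 1.
    set (h := hF K phi alpha l s) in *. set (m := mF K phi alpha l s).
    set (D := Dflop st) in *.
    assert (Hd : 0 <= h - m).
    { unfold h, m, hF, mF, wF, etaF. fold st. unfold ff_eta. rewrite Ef. fold D.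
      destruct (Req_EM_T D 0).
      - pose proof (leader_none K (cumL l s) (l (S s)) HK1 Hl). simpl mixloss.
        change (minK K (fun k => cumL l s k + l (S s) k)) with (Lstar K l (S s)) in H.
        change (minK K (cumL l s)) with (Lstar K l s) in H. lra.
      - assert (0 < D) by (destruct HD as [HD|HD]; [auto| congruence]).
        pose proof (mix_le_h K (ew K (cumL l s) (Some (ln (INR K) / D))) (l (S s)) (ln (INR K) / D)
          (Lstar K l s) (Lstar K l (S s)) (ew_prob K _ _ HK1)).
        assert (0 < ln (INR K) / D) by (apply Rdiv_lt_0_compat; auto; apply lnK_pos; auto).
        specialize (H0 H1). unfold hloss in *. lra. }
    assert (Hid : m - (Lstar K l (S s) - Lstar K l s) = gD K D (cumL l (S s)) - gD K D (cumL l s)).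
    { pose proof (flop_round K st (cumL l s) (l (S s)) HK Ef) as FR. cbv zeta in FR. exact FR. }
    pose proof (lvar_bound K _ _ Hw Hl) as Hv. fold (hF K phi alpha l s) in Hv. fold h in Hv.
    change (lvar K (wF K phi alpha l s) (l (S s)) h) with (vF K phi alpha l s) in Hv.
    set (v := vF K phi alpha l s) in *.
    set (n := INR (nF K phi alpha l s)) in *.
    set (x := HF K phi alpha l s) in *. set (q := Q2 K phi alpha l s) in *.
    set (A := AF K phi alpha l s) in *.
    split; [lra|]. split; [lra|].
    split.
    { destruct (Req_dec n 0) as [Z|Z].
      - rewrite Z in *. assert (x = 0) by lra. rewrite H. nra.
      - assert (0 < n) by lra.
        assert (q + n * (h*h) >= 2 * x * h).
        { pose proof (Rle_0_sqr (x - n * h)). unfold Rsqr in *.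
          assert (n * (q + n * (h*h) - 2 * x * h) >= 0) by nra.
          destruct (Rlt_le_dec (q + n * (h*h) - 2 * x * h) 0); [nra| lra]. }
        simpl. nra. }
    split; [lra|]. split; [simpl; nra|]. split; [lra|]. split; [lra|]. split; [lia|].
    specialize (Hflop eq_refl). destruct Hflop as (b0 & gs & Hb0 & Hb1 & Hgs & HU1 & HU2).
    pose proof (gD_Q K D (D + (h - m)) (cumL l (S s)) HK ltac:(lra)).
    pose proof (gD_anti K D (D + (h - m)) (cumL l (S s)) HK ltac:(lra)).
    pose proof (gD_bounds K (D + (h - m)) (cumL l (S s)) HK ltac:(lra)).
    assert (HUn1 : x + h - (D + (h - m)) - (A + (Lstar K l (S s) - Lstar K l s)) <=
       phi / (phi - 1) * b0 + (D + (h - m)) + gD K (D + (h - m)) (cumL l (S s))) by lra.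
    assert (HUn2 : - (phi / (phi - 1)) * b0 + gD K (D + (h - m)) (cumL l (S s)) - gs <=
       x + h - (D + (h - m)) - (A + (Lstar K l (S s) - Lstar K l s))) by lra.
    destruct (Rlt_dec (alpha * Dflip st) (D + (h - m))) as [Hs|Hs].
    + split; [|intros; discriminate]. intros _.
      pose proof (c1lem phi b0 (D + (h - m)) Hphi ltac:(lra) ltac:(lra)).
      assert (phi / (phi - 1) * b0 <= phi / (phi - 1) * (D + (h - m))) by (apply Rmult_le_compat_l; lra).
      split; lra.
    + split; [intros; discriminate|]. intros _.
      exists b0, gs. split; [lra|]. split; [lra|]. split; [lra|]. split; lra.
Qed.

Lemma alg1 n x A E : 0 <= x <= n -> 0 <= A <= n -> Rabs (x - A) <= E ->
  n * x - x * x <= n * A - A * A + n * E.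
Proof. intros Hx HA HE.
  assert (Hid : n * x - x * x - (n * A - A * A) = (x - A) * (n - x - A)) by ring.
  assert (Rabs (n - x - A) <= n) by (apply Rabs_le; lra).
  assert (Rabs ((x - A) * (n - x - A)) <= E * n).
  { rewrite Rabs_mult. apply Rmult_le_compat; auto; apply Rabs_pos. }
  pose proof (Rle_abs ((x - A) * (n - x - A))). lra. Qed.

Lemma alg2 T n A B : 0 <= n <= T -> 0 <= A <= n -> 0 <= B <= T - n ->
  T * (n * A - A * A) <= n * ((A + B) * (T - (A + B))).
Proof. intros Hn HA HB.
  assert (Hid : n * ((A + B) * (T - (A + B))) - T * (n * A - A * A)
     = n * B * ((T - n) - B) + (A * A * (T - n) + n * B * (n - 2 * A))) by ring.
  assert (0 <= n * B * ((T - n) - B)) by (apply Rmult_le_pos; [apply Rmult_le_pos|]; lra).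
  assert (0 <= A * A * (T - n) + n * B * (n - 2 * A)).
  { destruct (Rle_lt_dec (2 * A) n).
    - assert (0 <= A * A * (T - n)) by (apply Rmult_le_pos; [nra| lra]).
      assert (0 <= n * B * (n - 2 * A)) by (apply Rmult_le_pos; [apply Rmult_le_pos|]; lra).
      lra.
    - assert (n * B * (n - 2 * A) >= n * (T - n) * (n - 2 * A)).
      { assert (0 <= n * (T - n - B) * (2 * A - n)) by (apply Rmult_le_pos; [apply Rmult_le_pos|]; lra). nra. }
      assert (0 <= (T - n) * ((n - A) * (n - A))) by (apply Rmult_le_pos; [lra| nra]).
      nra. }
  lra. Qed.

Lemma final_alg T n x A Q2 Lst V E : 0 < T -> 0 <= n <= T -> 0 <= x <= n -> 0 <= A <= n ->
  0 <= Lst - A <= T - n -> n * Q2 >= x * x -> 0 <= Q2 -> V <= x - Q2 -> Rabs (x - A) <= E ->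
  V <= Lst * (T - Lst) / T + E.
Proof. intros HT Hn Hx HA HB HQ HQ0 HV HE.
  assert (HE0 : 0 <= E) by (pose proof (Rabs_pos (x - A)); lra).
  assert (T * V <= Lst * (T - Lst) + T * E).
  { destruct (Req_dec n 0) as [Z|Z].
    - subst n. assert (x = 0) by lra. subst x.
      assert (0 <= Lst * (T - Lst)) by (apply Rmult_le_pos; lra). nra.
    - assert (Hn' : 0 < n) by lra.
      pose proof (alg1 n x A E Hx HA HE).
      pose proof (alg2 T n A (Lst - A) Hn HA HB). replace (A + (Lst - A)) with Lst in H0 by ring.
      assert (n * V <= n * x - x * x) by nra.
      assert (n * (T * V) <= n * (Lst * (T - Lst) + T * E)) by nra.
      apply Rmult_le_reg_l with n; auto. }
  apply Rmult_le_reg_l with T; auto. unfold Rdiv.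
  replace (T * (Lst * (T - Lst) * / T + E)) with (Lst * (T - Lst) + T * E) by (field; lra). auto.
Qed.

Lemma inv0 K phi alpha l : (1 <= K)%nat -> Inv K phi alpha l 0.
Proof. intros HK. unfold Inv. simpl. rewrite Lstar0 by auto.
  repeat split; try lra; try lia; intros; try discriminate; lra. Qed.

Lemma inv_all K phi alpha l T : (2 <= K)%nat -> 1 < phi -> 0 < alpha ->
  (forall t k, (1 <= t <= T)%nat -> (k < K)%nat -> 0 <= l t k <= 1) ->
  forall s, (s <= T)%nat -> Inv K phi alpha l s.
Proof. intros HK Hp Ha Hl. induction s; intros Hs.
  - apply inv0; lia.
  - apply inv_step; auto. intros k Hk; apply Hl; auto; lia. apply IHs; lia. Qed.

Lemma main2 K T l phi alpha : (2 <= K)%nat -> (1 <= T)%nat ->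
  (forall t k, (1 <= t <= T)%nat -> (k < K)%nat -> 0 <= l t k <= 1) ->
  1 < phi -> 0 < alpha ->
  Vflop (ffstate K phi alpha l T) <=
    Lstar K l T * (INR T - Lstar K l T) / INR T
    + (phi / (phi - 1) + phi / alpha + 2) * Dflop (ffstate K phi alpha l T)
    + phi / alpha.
Proof. intros HK HT Hl Hp Ha.
  pose proof (inv_all K phi alpha l T HK Hp Ha Hl T (le_n T)) as I.
  unfold Inv in I. cbv zeta in I.
  set (st := ffstate K phi alpha l T) in *.
  destruct I as (HD & HV & HQ & Hx & Hq & HA & HB & Hn & Hflip & Hflop).
  set (D := Dflop st) in *.
  assert (Hc1 : 0 < phi / (phi - 1)) by (apply Rdiv_lt_0_compat; lra).
  assert (Hpa : 0 < phi / alpha) by (apply Rdiv_lt_0_compat; lra).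
  assert (HE : Rabs (HF K phi alpha l T - AF K phi alpha l T) <= (phi / (phi - 1) + 2) * D).
  { apply Rabs_le.
    assert (phi / (phi - 1) * D >= 0) by (apply Rle_ge, Rmult_le_pos; lra).
    destruct (inflip st) eqn:Ef.
    - specialize (Hflip eq_refl). lra.
    - specialize (Hflop eq_refl). destruct Hflop as (b0 & gs & Hb0 & _ & Hgs & HU1 & HU2).
      pose proof (gD_bounds K D (cumL l T) HK HD).
      assert (phi / (phi - 1) * b0 <= phi / (phi - 1) * D) by (apply Rmult_le_compat_l; lra).
      lra. }
  assert (HTp : 0 < INR T) by (apply lt_0_INR; lia).
  assert (Hnle : INR (nF K phi alpha l T) <= INR T) by (apply le_INR; auto).
  pose proof (pos_INR (nF K phi alpha l T)).
  pose proof (final_alg (INR T) (INR (nF K phi alpha l T)) (HF K phi alpha l T) (AF K phi alpha l T)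
    (Q2 K phi alpha l T) (Lstar K l T) (Vflop st) ((phi / (phi - 1) + 2) * D)
    HTp ltac:(lra) Hx HA HB HQ Hq HV HE).
  assert (0 <= phi / alpha * D) by (apply Rmult_le_pos; lra).
  lra.
Qed.

Lemma sumK_1 f : sumK 1 f = f 0%nat.
Proof. rewrite sumK_S, sumK_0. ring. Qed.

Lemma main1 T l phi alpha : (1 <= T)%nat ->
  (forall t k, (1 <= t <= T)%nat -> (k < 1)%nat -> 0 <= l t k <= 1) ->
  1 < phi -> 0 < alpha ->
  Vflop (ffstate 1 phi alpha l T) <=
    Lstar 1 l T * (INR T - Lstar 1 l T) / INR T
    + (phi / (phi - 1) + phi / alpha + 2) * Dflop (ffstate 1 phi alpha l T)
    + phi / alpha.
Proof. intros HT Hl Hp Ha.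
  assert (I : forall s, (s <= T)%nat -> 0 <= Dflop (ffstate 1 phi alpha l s) /\
     Vflop (ffstate 1 phi alpha l s) = 0 /\ 0 <= Lstar 1 l s <= INR s).
  { induction s; intros Hs.
    - simpl. rewrite Lstar0 by lia. lra.
    - destruct (IHs ltac:(lia)) as (HD & HV & HL).
      assert (Hl' : forall k, (k < 1)%nat -> 0 <= l (S s) k <= 1) by (intros; apply Hl; auto; lia).
      pose proof (inc_bounds 1 (cumL l s) (l (S s)) (le_n 1) Hl') as Hinc.
      change (minK 1 (fun k => cumL l s k + l (S s) k)) with (Lstar 1 l (S s)) in Hinc.
      change (minK 1 (cumL l s)) with (Lstar 1 l s) in Hinc.
      rewrite S_INR.
      assert (Hw : isprob 1 (wF 1 phi alpha l s)) by (apply ew_prob; auto).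
      pose proof (h_bounds 1 _ _ Hw Hl') as Hh. fold (hF 1 phi alpha l s) in Hh.
      destruct (inflip (ffstate 1 phi alpha l s)) eqn:Ef.
      + rewrite (ff_flip 1 phi alpha l s Ef). cbv zeta. simpl Dflop; simpl Vflop. split; [auto|]. split; [auto| lra].
      + rewrite (ff_flop 1 phi alpha l s Ef). cbv zeta. simpl Dflop; simpl Vflop.
        assert (Hv : vF 1 phi alpha l s = 0).
        { unfold vF, lvar, hF, hloss. rewrite !sumK_1. destruct Hw as [_ Hs1]. rewrite sumK_1 in Hs1.
          rewrite Hs1. ring. }
        assert (Hd : 0 <= hF 1 phi alpha l s - mF 1 phi alpha l s).
        { unfold hF, mF, wF, etaF. unfold ff_eta. rewrite Ef.
          destruct (Req_EM_T (Dflop (ffstate 1 phi alpha l s)) 0).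
          - pose proof (leader_none 1 (cumL l s) (l (S s)) (le_n 1) Hl'). simpl mixloss.
            change (minK 1 (fun k => cumL l s k + l (S s) k)) with (Lstar 1 l (S s)) in H.
            change (minK 1 (cumL l s)) with (Lstar 1 l s) in H. lra.
          - change (INR 1) with 1. rewrite ln_1. unfold Rdiv. rewrite Rmult_0_l.
            rewrite mix_zero by (apply ew_prob; auto). unfold hF, wF, etaF, ff_eta in Hh. rewrite Ef in Hh.
            destruct (Req_EM_T (Dflop (ffstate 1 phi alpha l s)) 0); [congruence|].
            change (INR 1) with 1 in Hh. rewrite ln_1 in Hh. unfold Rdiv in Hh. rewrite Rmult_0_l in Hh. lra. }
        split; [lra|]. split; [rewrite HV, Hv; ring| lra]. }
  destruct (I T (le_n T)) as (HD & HV & HL). rewrite HV.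
  assert (HTp : 0 < INR T) by (apply lt_0_INR; lia).
  assert (0 <= Lstar 1 l T * (INR T - Lstar 1 l T) / INR T).
  { unfold Rdiv. apply Rmult_le_pos; [apply Rmult_le_pos; lra| left; apply Rinv_0_lt_compat; lra]. }
  assert (Hc1 : 0 < phi / (phi - 1)) by (apply Rdiv_lt_0_compat; lra).
  assert (Hpa : 0 < phi / alpha) by (apply Rdiv_lt_0_compat; lra).
  assert (0 <= (phi / (phi - 1) + phi / alpha + 2) * Dflop (ffstate 1 phi alpha l T)) by (apply Rmult_le_pos; lra).
  lra.
Qed.

Theorem lemma13 (K T : nat) (l : nat -> nat -> R) (phi alpha : R) :
  (1 <= K)%nat -> (1 <= T)%nat ->
  (forall t k, (1 <= t <= T)%nat -> (k < K)%nat -> 0 <= l t k <= 1) ->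
  1 < phi -> 0 < alpha ->
  Hff (ffstate K phi alpha l T) >= Lstar K l T ->
  Vflop (ffstate K phi alpha l T) <=
    Lstar K l T * (INR T - Lstar K l T) / INR T
    + (phi / (phi - 1) + phi / alpha + 2) * Dflop (ffstate K phi alpha l T)
    + phi / alpha.
Proof. intros HK HT Hl Hp Ha _.
  destruct (Nat.eq_dec K 1) as [->|NK].
  - apply main1; auto.
  - apply main2; auto; lia.
Qed.
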